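(* Let $d\ge 0$ be an integer, let $b_0=0<b_1<\dots<b_d$ be real numbers, and let $p_0(x),p_1(x),\dots,p_d(x)\in\mathbf{R}[x]$ be polynomials with real coefficients, not all of them zero. Then the function $$F(x)=\sum_{i=0}^d p_i(x)\log(x+b_i),$$ defined for $x>0$, has only finitely many positive real zeros. In particular, the sequence $(\log n)_{n\ge 1}$ is not holonomic.
   Context: A sequence of complex numbers $(a_n)_{n\ge 1}$ is called holonomic (P-recursive, D-finite) if there exist an integer $d\ge 0$ and polynomials $p_0(x),\dots,p_d(x)\in\mathbf{C}[x]$, not all zero, such that $p_d(n)a_{n+d}+\cdots+p_1(n)a_{n+1}+p_0(n)a_n=0$ for every integer $n\ge 1$. Here $\log$ denotes the natural logarithm. *)

(* Defs.v *)
From HB Require Import structures.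
From mathcomp Require Import all_boot all_order all_algebra.
From mathcomp Require Import all_classical all_reals all_analysis.
From mathcomp Require Import complex.
Set Implicit Arguments. Unset Strict Implicit. Unset Printing Implicit Defensive.
Import Order.TTheory GRing.Theory Num.Theory.
Local Open Scope ring_scope.

Definition holonomic (C : numClosedFieldType) (a : nat -> C) : Prop :=
  exists (d : nat) (p : 'I_d.+1 -> {poly C}),
    (exists i, p i != 0) /\
    forall n : nat, (1 <= n)%N ->
      \sum_(i < d.+1) (p i).[n%:R] * a (n + i)%N = 0.

(* Main.v *)
Require Import Defs.
From HB Require Import structures.
From mathcomp Require Import all_boot all_order all_algebra.
From mathcomp Require Import all_classical all_reals all_analysis.
From mathcomp Require Import complex.
From mathcomp Require Import zify ring lra.
Import Order.TTheory GRing.Theory Num.Theory.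
Local Open Scope ring_scope.

Local Open Scope classical_set_scope.

Section Rol.
Variable R : realType.

Lemma is_derive_uniq {f : R -> R} {x a b : R} :
  is_derive x 1 f a -> is_derive x 1 f b -> a = b.
Proof. by case=> _ <-; case=> _ <-. Qed.

Lemma rolle_finite (f f' : R -> R) :
  (forall x : R, 0 < x -> is_derive x 1 f (f' x)) ->
  finite_set [set x | 0 < x /\ f' x = 0] ->
  finite_set [set x | 0 < x /\ f x = 0].
Proof.
move=> df /finite_seqP[s hs].
set A := [set x | 0 < x /\ f x = 0].
pose phi (z : R) := count (fun c => z < c) s.
have key : forall x y, A x -> A y -> x < y -> (phi y < phi x)%N.
  move=> x y [x0 fx] [y0 fy] xy.
  have [c cI dc] : exists2 c, c \in `]x, y[%R & is_derive c 1 f 0.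
    apply: Rolle => //; last by rewrite fx fy.
      move=> z; rewrite in_itv /= => /andP[xz _].
      by have := df z (lt_trans x0 xz); case.
    apply: derivable_within_continuous => z; rewrite in_itv /= => /andP[xz _].
    by have := df z (lt_le_trans x0 xz); case.
  move: cI; rewrite in_itv /= => /andP[xc cy].
  have c0 : 0 < c by apply: lt_trans xc.
  have fc : f' c = 0.
    have := is_derive_uniq (df c c0) dc. by [].
  idtac.
  have cs : c \in s.
    have : [set x | 0 < x /\ f' x = 0] c by [].
    by rewrite hs.
  pose a3 := (fun c' : R => (x < c' <= y)%R).
  have := count_predUI (fun c => y < c) a3 s.
  have -> : count (predI (fun c => y < c) a3) s = 0%N.
    apply/eqP; rewrite -leqn0 leqNgt -has_count; apply/hasPn => z _ /=.
    by apply/negP => /andP[yz /andP[_ zy]]; move: (lt_le_trans yz zy); rewrite ltxx.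
  have -> : count (predU (fun c => y < c) a3) s = phi x.
    apply: eq_count => z /=; apply/idP/idP.
      by case/orP => [/(lt_trans xy)//|/andP[]].
    move=> xz; case: (ltP y z) => //= zy.
    by rewrite /a3 xz zy.
  have : (0 < count a3 s)%N.
    by rewrite -has_count; apply/hasP; exists c => //; rewrite /a3 xc ltW.
  by rewrite /phi addn0 => h ->; rewrite -[X in (X < _)%N]addn0 ltn_add2l.
have inj : {in A &, injective phi}.
  move=> x y; rewrite !inE => Ax Ay exy.
  case: (ltgtP x y) => // xy.
    by move: (key _ _ Ax Ay xy); rewrite exy ltnn.
  by move: (key _ _ Ay Ax xy); rewrite exy ltnn.
rewrite -(eq_finite_set (inj_card_eq inj)).
apply: (@sub_finite_set _ _ `I_(size s).+1); last exact: finite_II.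
by move=> _ [z _ <-]; rewrite /= ltnS /phi count_size.
Qed.

End Rol.
Local Close Scope classical_set_scope.

Section Alg.
Variable R : realType.

Definition Dp (b : R) : {poly R} := 'X - (- b)%:P.

Definition rstep (p : {poly R}) (b : R) (n : nat) (r : {poly R}) : {poly R} :=
  p^`(n) * (Dp b) ^+ n + Dp b * r^`() - r *+ n.

Fixpoint rseq (p : {poly R}) (b : R) (n : nat) : {poly R} :=
  if n is n'.+1 then rstep p b n' (rseq p b n') else 0.

Lemma size_Dpn b n : size (Dp b ^+ n) = n.+1.
Proof. exact: size_exp_XsubC. Qed.

Lemma size_derivn_le (p : {poly R}) n : (size p^`(n) <= size p - n)%N.
Proof.
elim: n => [|n IH]; first by rewrite derivn0 subn0.
by rewrite derivnS polyorder.size_deriv subnS -!subn1 leq_sub2r.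
Qed.

Lemma size_rseq p b n : (size (rseq p b n) <= size p)%N.
Proof.
elim: n => [|n IH] /=; first by rewrite size_poly0.
rewrite /rstep.
apply: (leq_trans (size_add _ _)); rewrite geq_max; apply/andP; split.
  apply: (leq_trans (size_add _ _)); rewrite geq_max; apply/andP; split.
    have [sp|sp] := leqP (size p) n.
      by rewrite derivn_poly0 // mul0r size_poly0.
    apply: (leq_trans (size_mul_leq _ _)); rewrite size_Dpn.
    rewrite addnS /= addnC -leq_subRL ?(ltnW sp) //; exact: size_derivn_le.
  have [->|r0] := eqVneq (rseq p b n) 0; first by rewrite deriv0 mulr0 size_poly0.
  apply: (leq_trans (size_mul_leq _ _)).
  rewrite size_XsubC polyorder.size_deriv -subn1.
  have -> : (2%R : nat) = 2%N by [].
  have h : (0 < size (rseq p b n))%N by rewrite size_poly_gt0.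
  move: IH; rewrite -(prednK h) /=; lia.
by rewrite size_polyN -scaler_nat (leq_trans (size_scale_leq _ _)).
Qed.


Lemma coef_mul_top (A B : {poly R}) k n :
  (size A <= k.+1)%N -> (size B <= n.+1)%N -> (A * B)`_(k + n) = A`_k * B`_n.
Proof.
move=> sA sB; rewrite coefM.
have kl : (k < (k + n).+1)%N by rewrite ltnS leq_addr.
rewrite (bigD1 (Ordinal kl)) //= addKn big1 ?addr0 // => i ik.
case: (ltngtP i k) => h.
- rewrite [B`_ _]nth_default ?mulr0 //.
  apply: (leq_trans sB); lia.
- by rewrite [A`_ _]nth_default ?mul0r //; apply: (leq_trans sA).
- by move: ik; rewrite (_ : i = Ordinal kl) ?eqxx //; apply: val_inj.
Qed.

Lemma coef_Dpn_top b n : (Dp b ^+ n)`_n = 1.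
Proof.
have m : Dp b ^+ n \is monic by apply/monic_exp/monicXsubC.
by move/monicP: m; rewrite /lead_coef size_Dpn.
Qed.

Lemma coef_rstep (p : {poly R}) (b : R) n (r : {poly R}) j : size p = j.+1 -> (size r <= j.+1)%N ->
  (rstep p b n r)`_j = p`_j * (j ^_ n)%:R + r`_j * (j%:R - n%:R).
Proof.
move=> sp sr; rewrite /rstep coefB coefD coefMn.
have t1 : (p^`(n) * Dp b ^+ n)`_j = p`_j * (j ^_ n)%:R.
  case: (leqP n j) => nj.
    rewrite -{1}(subnK nj) coef_mul_top ?size_Dpn //; last first.
      apply: (leq_trans (size_derivn_le p n)); rewrite sp subSn //.
    by rewrite coef_Dpn_top mulr1 coef_derivn subnKC // mulr_natr.
  by rewrite derivn_poly0 ?sp // ffact_small // mul0r coef0 mulr0.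
have t2 : (Dp b * r^`())`_j = r`_j *+ j.
  rewrite /Dp mulrBl coefB coefXM coefCM.
  case: j sp sr {t1} => [|j] sp sr.
    by rewrite coef_deriv [r`_1]nth_default // eqxx mul0rn mulr0 subr0 mulr0n.
  by rewrite !coef_deriv [r`_(j.+2)]nth_default // mul0rn mulr0 subr0.
by rewrite t1 t2 -[r`_j *+ j]mulr_natr -[r`_j *+ n]mulr_natr; ring.
Qed.

Fixpoint aseq (j n : nat) : R :=
  if n is n'.+1 then (j ^_ n')%:R + (j%:R - n'%:R) * aseq j n' else 0.

Lemma coef_rseq (p : {poly R}) (b : R) n j : size p = j.+1 -> (rseq p b n)`_j = p`_j * aseq j n.
Proof.
move=> sp; elim: n => [|n IH] /=; first by rewrite coef0 mulr0.
rewrite coef_rstep // ?IH; last by rewrite -sp size_rseq.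
ring.
Qed.

Lemma aseq_neq0 j n : (j < n)%N -> aseq j n != 0.
Proof.
elim: n => [//|n IH]; rewrite ltnS leq_eqVlt => /orP[/eqP <-|jn] /=.
  by rewrite ffactnn subrr mul0r addr0 pnatr_eq0 -lt0n fact_gt0.
rewrite ffact_small // add0r mulf_neq0 ?IH //.
by rewrite subr_eq0 eqr_nat neq_ltn jn.
Qed.

Lemma rseq_neq0 (p : {poly R}) (b : R) N : p != 0 -> (size p <= N)%N -> rseq p b N != 0.
Proof.
move=> p0 sN.
have sp : size p = (size p).-1.+1 by rewrite prednK // size_poly_gt0.
apply/eqP => /(congr1 (fun q : {poly R} => q`_(size p).-1)).
rewrite coef_rseq // coef0 => /eqP; rewrite mulf_eq0 => /orP[].
  by rewrite -/(lead_coef p) lead_coef_eq0 (negbTE p0).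
by apply/negP/aseq_neq0; rewrite -ltnS -sp.
Qed.

End Alg.

Section An.
Variable R : realType.

Definition Tf (p : {poly R}) (b : R) (rr : {poly R}) (n : nat) : R -> R :=
  fun x => (p^`(n)).[x] * ln (x + b) + rr.[x] * ((x + b) ^+ n)^-1.

Lemma derT (p r r2 : {poly R}) (b : R) n (x : R) : 0 < x + b ->
  (forall x, r2.[x] = (p^`(n)).[x] * (x + b) ^+ n + (x + b) * (r^`()).[x] - r.[x] * n%:R) ->
  is_derive x 1 (Tf p b r n) (Tf p b r2 n.+1 x).
Proof.
move=> y0 hr2.
have hA := is_derive_poly (p^`(n)) x.
have hr := is_derive_poly r x.
have hl : is_derive x 1 (@ln R \o shift b) ((x + b)^-1 * 1).
  apply: is_derive1_comp; last exact: is_derive_shift.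
  exact: is_derive1_ln.
have hp := @is_deriveX _ _ (shift b) n x 1 1 (is_derive_shift x 1 b).
have hv := is_deriveV _ hp.
have e : Tf p b r n = horner (p^`(n)) * (@ln R \o shift b) + horner r * (fun z => ((shift b ^+ n) z)^-1).
  by apply: funext => z; rewrite /Tf exprfctE.
rewrite e; apply: is_derive_eq.
  apply: is_deriveD; apply: is_deriveM => //.
  apply: hv.
  by rewrite exprfctE /= expf_neq0 // gt_eqF.
have yn : x + b != 0 by rewrite gt_eqF.
have scE : forall a c : R, a *: c = a * c by [].
rewrite !scE /Tf hr2 exprfctE /=.
have e1 : n%:R * (x + b) ^+ n.-1 = n%:R * (x + b) ^+ n / (x + b).
  by case: n {e hp hv hr2 hA} => [|m]; rewrite ?mul0r // exprS; field.
rewrite e1 [(x + b) ^+ n.+1]exprS.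
have zn : (x + b) ^+ n != 0 by rewrite expf_neq0.
move: zn; set z := (x + b) ^+ n => zn.
field.
by rewrite zn yn.
Qed.
Lemma foo : True. Proof. by []. Qed.
End An.

Arguments Tf {R}. Arguments rseq {R}. Arguments Dp {R}. Arguments rstep {R}. Arguments aseq {R}.
Section P1.
Variable R : realType.

Lemma iter_finite (G : nat -> R -> R) N :
  (forall n (x : R), 0 < x -> is_derive x 1 (G n) (G n.+1 x)) ->
  finite_set [set x | 0 < x /\ G N x = 0]%classic ->
  finite_set [set x | 0 < x /\ G 0%N x = 0]%classic.
Proof.
elim: N G => [//|N IH] G dG fin.
apply: (@rolle_finite R (G 0%N) (G 1%N) (fun x => dG 0%N x)).
by apply: (IH (fun n => G n.+1)) => // n x; exact: dG.
Qed.

Lemma poly_roots_finite (q : {poly R}) : q != 0 ->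
  finite_set [set x | q.[x] = 0]%classic.
Proof.
move=> q0; case: (pselect (finite_set [set x | q.[x] = 0]%classic)) => // inf.
have [B BA sB] := infinite_set_fset (size q) inf.
have := max_poly_roots q0 (rs := finmap.enum_fset B).
rewrite finmap.fset_uniq.
have -> : all (root q) (finmap.enum_fset B).
  apply/allP => z zB; apply/rootP; apply: BA; exact: zB.
by move=> /(_ isT isT); rewrite ltnNge sB.
Qed.

Lemma dvdp_big (I : finType) (P : pred I) (F : I -> {poly R}) (D : {poly R}) :
  (forall i, P i -> D %| F i) -> D %| \sum_(i | P i) F i.
Proof.
move=> h; elim/big_rec: _ => [|i x Pi hx]; first exact: dvdp0.
by rewrite dvdp_add // h.
Qed.

Lemma part1 (d : nat) (b : 'I_d.+1 -> R) (p : 'I_d.+1 -> {poly R}) :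
  b ord0 = 0 -> (forall i j : 'I_d.+1, (i < j)%N -> b i < b j) ->
  (exists i, p i != 0) ->
  finite_set [set x : R | 0 < x /\ \sum_(i < d.+1) (p i).[x] * ln (x + b i) = 0]%classic.
Proof.
move=> b0 bmono [i0 pi0].
have bge0 : forall i, 0 <= b i.
  move=> i; case: (posnP i) => [i0'|ip]; last by rewrite -b0 ltW // bmono.
  by rewrite (_ : i = ord0) ?b0 //; apply: val_inj.
have binj : forall i j, i != j -> b i != b j.
  move=> i j; rewrite neq_ltn => /orP[] h; first by rewrite lt_eqF // bmono.
  by rewrite gt_eqF // bmono.
pose N := (\sum_(i < d.+1) size (p i))%N.
have sN : forall i, (size (p i) <= N)%N by move=> i; rewrite /N (bigD1 i) //= leq_addr.
pose G n x := \sum_(i < d.+1) Tf (p i) (b i) (rseq (p i) (b i) n) n x.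
have G0 : forall x, G 0%N x = \sum_(i < d.+1) (p i).[x] * ln (x + b i).
  by move=> x; apply: eq_bigr => i _; rewrite /Tf derivn0 /= horner0 mul0r addr0.
have dG : forall n (x : R), 0 < x -> is_derive x 1 (G n) (G n.+1 x).
  move=> n x x0.
  have -> : G n = \sum_(i < d.+1) Tf (p i) (b i) (rseq (p i) (b i) n) n.
    by apply: funext => z; rewrite /G fct_sumE.
  apply: is_derive_sum => i; apply: derT.
    by apply: (lt_le_trans x0); rewrite lerDl.
  move=> z /=; rewrite /rstep !(hornerD, hornerN, hornerM, horner_exp, hornerMn).
  by rewrite hornerX hornerC opprK mulr_natr.
apply: (@sub_finite_set _ _ [set x | 0 < x /\ G 0%N x = 0]%classic).
  by move=> x /= [x0 h]; split => //; rewrite G0.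
apply: (@iter_finite G N dG).
pose U i := \prod_(l < d.+1 | l != i) Dp (b l) ^+ N.
pose Q := \sum_(i < d.+1) rseq (p i) (b i) N * U i.
have Q0 : Q != 0.
  apply/eqP => Qe.
  have Npos : (0 < N)%N by apply: (leq_trans _ (sN i0)); rewrite size_poly_gt0.
  have D1 : Dp (b i0) ^+ N %| \sum_(i < d.+1 | i != i0) rseq (p i) (b i) N * U i.
    apply: dvdp_big => i ii0; apply: dvdp_mull.
    by rewrite /U (bigD1 i0) //= 1?eq_sym //; apply: dvdp_mulIl.
  have D2 : Dp (b i0) ^+ N %| rseq (p i0) (b i0) N * U i0.
    have : Dp (b i0) ^+ N %| Q by rewrite Qe dvdp0.
    by rewrite /Q (bigD1 i0) //= (dvdp_addl _ D1).
  have cop : coprimep (Dp (b i0) ^+ N) (U i0).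
    rewrite coprimep_pexpl // coprimep_sym /Dp coprimep_XsubC.
    rewrite /root /U horner_prod; apply/prodf_neq0 => l li0.
    rewrite horner_exp expf_neq0 // hornerXsubC opprK addrC subr_eq0.
    exact: binj.
  move: D2; rewrite Gauss_dvdpl // => /dvdp_leq.
  rewrite rseq_neq0 // => /(_ isT).
  rewrite size_Dpn => h.
  have := leq_trans h (size_rseq _ _ _ _); rewrite ltnNge sN //.
apply: (@sub_finite_set _ _ [set x | Q.[x] = 0]%classic); last exact: poly_roots_finite.
move=> x /= [x0 Gx].
have yn : forall i, x + b i != 0.
  by move=> i; rewrite gt_eqF // (lt_le_trans x0) // lerDl.
have -> : Q.[x] = G N x * \prod_(l < d.+1) (x + b l) ^+ N.
  rewrite /Q /G horner_sum mulr_suml; apply: eq_bigr => i _.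
  rewrite /Tf derivn_poly0 // horner0 mul0r add0r hornerM /U horner_prod.
  rewrite [in RHS](bigD1 i) //= mulrA divfK ?expf_neq0 //.
  congr (_ * _); apply: eq_bigr => l _.
  by rewrite horner_exp hornerXsubC opprK.
by rewrite Gx mul0r.
Qed.
End P1.

Section P2.
Variable R : realType.
Local Open Scope complex_scope.

Lemma Re_sum (I : Type) (r : seq I) (P : pred I) (F : I -> R[i]) :
  complex.Re (\sum_(i <- r | P i) F i) = \sum_(i <- r | P i) complex.Re (F i).
Proof.
elim/big_rec2: _ => [//|j y1 y2 _ <-].
by case: (F j) => a1 b1; case: y2 => a2 b2.
Qed.

Lemma Im_sum (I : Type) (r : seq I) (P : pred I) (F : I -> R[i]) :
  complex.Im (\sum_(i <- r | P i) F i) = \sum_(i <- r | P i) complex.Im (F i).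
Proof.
elim/big_rec2: _ => [//|j y1 y2 _ <-].
by case: (F j) => a1 b1; case: y2 => a2 b2.
Qed.

Lemma Re_mulr (z : R[i]) (r : R) : complex.Re (z * r%:C) = complex.Re z * r.
Proof. by case: z => a c /=; rewrite mulr0 subr0. Qed.

Lemma Im_mulr (z : R[i]) (r : R) : complex.Im (z * r%:C) = complex.Im z * r.
Proof. by case: z => a c /=; rewrite mulr0 add0r. Qed.

Lemma Re_horner (q : {poly R[i]}) (x : R) :
  (map_poly (@complex.Re R) q).[x] = complex.Re (q.[x%:C]).
Proof.
rewrite /map_poly horner_poly horner_coef Re_sum; apply: eq_bigr => k _.
by rewrite -rmorphXn Re_mulr.
Qed.

Lemma Im_horner (q : {poly R[i]}) (x : R) :
  (map_poly (@complex.Im R) q).[x] = complex.Im (q.[x%:C]).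
Proof.
rewrite /map_poly horner_poly horner_coef Im_sum; apply: eq_bigr => k _.
by rewrite -rmorphXn Im_mulr.
Qed.


Lemma part2 : ~ holonomic (fun n : nat => ((ln (n%:R : R))%:C)%C : R[i]).
Proof.
move=> [d [p [[i0 pi0] H]]].
pose b (j : 'I_d.+1) := ((j : nat)%:R : R).
have b0 : b ord0 = 0 by [].
have bmono : forall j k : 'I_d.+1, (j < k)%N -> b j < b k.
  by move=> j k jk; rewrite /b ltr_nat.
have key : forall (f : R[i] -> R) (q : 'I_d.+1 -> {poly R}),
    (forall z w : R[i], f (z + w) = f z + f w) -> f 0 = 0 ->
    (forall (z : R[i]) (r : R), f (z * r%:C) = f z * r) ->
    (forall j x, (q j).[x] = f ((p j).[x%:C])) ->
    forall n : nat, (1 <= n)%N ->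
      \sum_(j < d.+1) (q j).[n%:R] * ln (n%:R + b j) = 0.
  move=> f q fD f0 fM fq n n1.
  have := congr1 f (H n n1); rewrite f0 => h; rewrite -h.
  elim/big_rec2: _ => [//|j y1 y2 _ ->]; first by rewrite f0.
  rewrite fD fM fq natrD -(rmorph_nat (real_complex R) n).
  by [].
have hr := key (@complex.Re R) (fun j => map_poly (@complex.Re R) (p j))
  (fun z w => ltac:(by case: z; case: w)) (erefl _) (@Re_mulr) (fun j x => Re_horner _ _).
have hi := key (@complex.Im R) (fun j => map_poly (@complex.Im R) (p j))
  (fun z w => ltac:(by case: z; case: w)) (erefl _) (@Im_mulr) (fun j x => Im_horner _ _).
have [q [[j qj] hq]] : exists q : 'I_d.+1 -> {poly R}, (exists j, q j != 0) /\
    forall n : nat, (1 <= n)%N -> \sum_(j < d.+1) (q j).[n%:R] * ln (n%:R + b j) = 0.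
  case: (eqVneq (map_poly (@complex.Re R) (p i0)) 0) => er; last first.
    by exists (fun j => map_poly (@complex.Re R) (p j)); split => //; exists i0.
  case: (eqVneq (map_poly (@complex.Im R) (p i0)) 0) => ei; last first.
    by exists (fun j => map_poly (@complex.Im R) (p j)); split => //; exists i0.
  case/negP: pi0; apply/eqP/polyP => k.
  have := congr1 (fun q : {poly R} => q`_k) er; rewrite coef_map_id0 // coef0.
  have := congr1 (fun q : {poly R} => q`_k) ei; rewrite coef_map_id0 // coef0.
  by rewrite coef0; case: ((p i0)`_k) => a c /= -> ->.
have fin := @part1 R d b q b0 bmono (ex_intro _ j qj).
apply: infinite_nat.
have inj : {in [set: nat]%classic &, injective (fun n : nat => (n.+1%:R : R))}.
  by move=> m k _ _ /eqP; rewrite eqr_nat => /eqP [].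
rewrite -(eq_finite_set (inj_card_eq inj)).
apply: (sub_finite_set _ fin) => _ [m _ <-]; split => //.
by apply: hq.
Qed.
End P2.

Local Open Scope classical_set_scope.

Theorem mainTheorem1 :
  (forall (R : realType) (d : nat) (b : 'I_d.+1 -> R) (p : 'I_d.+1 -> {poly R}),
     b ord0 = 0 ->
     (forall i j : 'I_d.+1, (i < j)%N -> b i < b j) ->
     (exists i, p i != 0) ->
     finite_set [set x : R | 0 < x /\
        \sum_(i < d.+1) (p i).[x] * ln (x + b i) = 0]) /\
  (forall R : realType,
     ~ holonomic (fun n : nat => ((ln (n%:R : R))%:C)%C : R[i])).
Proof.
split.
  by move=> R d b p b0 bm ex; exact: (@part1 R d b p b0 bm ex).
by move=> R; exact: part2.
Qed.
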